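(* Let $\mathbb{K}$ be a semiring and let $\mathcal{A}=(Q,A,E,I,T)$ and $\mathcal{B}=(R,A,F,J,U)$ be two two-way $\mathbb{K}$-automata. If $\mathcal{A}$ is a covering (respectively an in-covering) of $\mathcal{B}$ via the surjective morphism $\varphi:Q\to R$, then the map sending a computation $((p_0,i_0),\dots,(p_k,i_k))$ of $\mathcal{A}$ to $((\varphi(p_0),i_0),\dots,(\varphi(p_k),i_k))$ is a bijection between the computations of $\mathcal{A}$ and the computations of $\mathcal{B}$, and every computation of $\mathcal{A}$ and its image in $\mathcal{B}$ have the same label and the same weight.
   Context: A semiring $\mathbb{K}$ has addition $\oplus$ and multiplication $\otimes$ with the usual axioms. With $A_{\vdash\dashv}=A\cup\{\vdash,\dashv\}$ ($\vdash,\dashv$ fresh end-markers), a two-way $\mathbb{K}$-automaton $(Q,A,E,I,T)$ has finite state set $Q$, partial functions $I,T:Q\to\mathbb{K}$ (supports $\underline I$, $\underline T$ are the initial/final states), and a partial function $E:Q\times(A_{\vdash\dashv}\times\{-1,+1\})\times Q\to\mathbb{K}$ whose support $\underline E$ (the transitions) contains no $(p,\vdash,-1,q)$ nor $(p,\dashv,+1,q)$. For $t=(p,a,d,q)$: $\sigma(t)=p$, $\tau(t)=q$, $\lambda(t)=a$, $\delta(t)=d$. For $w=w_1\cdots w_n$ let $w_0=\vdash$, $w_{n+1}=\dashv$. A computation on $w$ (its label) is a sequence of configurations $((p_0,i_0),\dots,(p_k,i_k))$, $p_j\in Q$, $i_j\in[0;n+1]$, with $i_0=1$, $i_k=n+1$,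 $p_0\in\underline I$, $p_k\in\underline T$, and for each $j<k$ a transition $t_j\in\underline E$ with $\sigma(t_j)=p_j$, $\tau(t_j)=p_{j+1}$, $\lambda(t_j)=w_{i_j}$, $i_{j+1}=i_j+\delta(t_j)$; its weight is $I(p_0)\otimes\bigotimes_{j=0}^{k-1}E(t_j)\otimes T(p_k)$. A morphism from $\mathcal{A}=(Q,A,E,I,T)$ to $\mathcal{B}=(R,A,F,J,U)$ is a map $\varphi:Q\to R$ such that (i) $J(\varphi(p))=I(p)$ for all $p\in\underline I$; (ii) $U(\varphi(p))=T(p)$ for all $p\in\underline T$; (iii) for every $t=(p,a,d,q)\in\underline E$, $\tilde\varphi(t)=(\varphi(p),a,d,\varphi(q))\in\underline F$ and $F(\tilde\varphi(t))=E(t)$. It is surjective if $\varphi(Q)=R$, $\varphi(\underline I)=\underline J$, $\varphi(\underline T)=\underline U$ and $\tilde\varphi(\underline E)=\underline F$. $\mathcal{A}$ is a covering of $\mathcal{B}$ if there is a surjective morphism $\varphi$ with: (i) for all $r\in\underline U$, $\varphi^{-1}(r)\subseteq\underline T$; (ii) for all $r\in\underline J$ there is exactly one $p\in\varphi^{-1}(r)\cap\underline I$; (iii) for all $t\in\underline F$ and all $p\in\varphi^{-1}(\sigma(t))$ there is exactly one $t'\in\underline E$ with $\tilde\varphi(t')=t$ and $\sigma(t')=p$. $\mathcal{A}$ is an in-covering of $\mathcal{B}$ if there is a surjective morphism $\varphi$ with: (i) for all $r\in\underline J$, $\varphi^{-1}(r)\subseteq\underline I$; (ii) for all $r\in\underline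 U$ there is exactly one $p\in\varphi^{-1}(r)\cap\underline T$; (iii) for all $t\in\underline F$ and all $q\in\varphi^{-1}(\tau(t))$ there is exactly one $t'\in\underline E$ with $\tilde\varphi(t')=t$ and $\tau(t')=q$. *)

(* Defs.v *)
From HB Require Import structures.
From mathcomp Require Import all_boot all_order all_algebra.
Set Implicit Arguments. Unset Strict Implicit. Unset Printing Implicit Defensive.
Import GRing.Theory.
Local Open Scope ring_scope.

Inductive letter (A : Type) := Lt of A | LEnd | REnd .
Arguments LEnd {A}. Arguments REnd {A}.

(** Directions: Left = -1, Right = +1. *)
Inductive dir := Left | Right.

Record trans (Q A : Type) := Trans { sigma : Q; lambda : letter A; delta : dir; tau : Q }.

(** A two-way K-automaton (Q, A, E, I, T); partial functions are option-valued,
    their support is the set where they are defined. *)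
Record twa (K : pzSemiRingType) (A : Type) (Q : finType) := Twa {
  tE : trans Q A -> option K;
  tI : Q -> option K;
  tT : Q -> option K }.

Definition supp (X K : Type) (f : X -> option K) (x : X) : bool := isSome (f x).

Definition wf_twa K A Q (M : twa K A Q) : Prop :=
  forall t, supp (tE M) t ->
    ~ (lambda t = LEnd /\ delta t = Left) /\ ~ (lambda t = REnd /\ delta t = Right).

(** w_i for i in [0; n+1], with w_0 = ⊢ and w_{n+1} = ⊣. *)
Definition wletter (A : Type) (w : seq A) (i : nat) : letter A :=
  if i == 0%N then LEnd
  else match nth None (map Some w) i.-1 with Some a => Lt a | None => REnd end.

(** i' = i + δ (as integers). *)
Definition moves (d : dir) (i i' : nat) : Prop :=
  match d with Right => i' = i.+1 | Left => i'.+1 = i end.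

Definition is_comp K A (Q : finType) (M : twa K A Q) (w : seq A) (c : seq (Q * nat)) : Prop :=
  exists c0 cs, c = c0 :: cs /\
  c0.2 = 1%N /\ (last c0 cs).2 = (size w).+1 /\
  supp (tI M) c0.1 /\ supp (tT M) (last c0 cs).1 /\
  (forall x, x \in c -> (x.2 <= (size w).+1)%N) /\
  (forall j, (j.+1 < size c)%N ->
     exists t, supp (tE M) t /\ sigma t = (nth c0 c j).1 /\ tau t = (nth c0 c j.+1).1 /\
       lambda t = wletter w (nth c0 c j).2 /\ moves (delta t) (nth c0 c j).2 (nth c0 c j.+1).2).

Definition step_trans (A : Type) (Q : Type) (w : seq A) (x y : Q * nat) : trans Q A :=
  Trans x.1 (wletter w x.2) (if y.2 == x.2.+1 then Right else Left) y.1.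

(** Weight I(p_0) ⊗ E(t_0) ⊗ ... ⊗ E(t_{k-1}) ⊗ T(p_k) (used on computations,
    where all these values are defined). *)
Definition weight K A (Q : finType) (M : twa K A Q) (w : seq A) (c : seq (Q * nat)) : K :=
  match c with
  | [::] => 0
  | c0 :: cs =>
      odflt 0 (tI M c0.1)
      * (\prod_(xy <- zip c cs) odflt 0 (tE M (step_trans w xy.1 xy.2)))
      * odflt 0 (tT M (last c0 cs).1)
  end.

Definition tmap (Q R A : Type) (phi : Q -> R) (t : trans Q A) : trans R A :=
  Trans (phi (sigma t)) (lambda t) (delta t) (phi (tau t)).

Definition is_morphism K A (Q R : finType) (M : twa K A Q) (N : twa K A R) (phi : Q -> R) : Prop :=
  (forall p, supp (tI M) p -> tI N (phi p) = tI M p) /\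
  (forall p, supp (tT M) p -> tT N (phi p) = tT M p) /\
  (forall t, supp (tE M) t -> supp (tE N) (tmap phi t) /\ tE N (tmap phi t) = tE M t).

Definition is_surj_morphism K A (Q R : finType) (M : twa K A Q) (N : twa K A R) (phi : Q -> R) : Prop :=
  is_morphism M N phi /\
  (forall r, exists p, phi p = r) /\
  (forall r, supp (tI N) r <-> exists p, supp (tI M) p /\ phi p = r) /\
  (forall r, supp (tT N) r <-> exists p, supp (tT M) p /\ phi p = r) /\
  (forall t, supp (tE N) t <-> exists t', supp (tE M) t' /\ tmap phi t' = t).

Definition is_covering K A (Q R : finType) (M : twa K A Q) (N : twa K A R) (phi : Q -> R) : Prop :=
  is_surj_morphism M N phi /\
  (forall r, supp (tT N) r -> forall p, phi p = r -> supp (tT M) p) /\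
  (forall r, supp (tI N) r -> exists! p, phi p = r /\ supp (tI M) p) /\
  (forall t, supp (tE N) t -> forall p, phi p = sigma t ->
     exists! t', supp (tE M) t' /\ tmap phi t' = t /\ sigma t' = p).

Definition is_in_covering K A (Q R : finType) (M : twa K A Q) (N : twa K A R) (phi : Q -> R) : Prop :=
  is_surj_morphism M N phi /\
  (forall r, supp (tI N) r -> forall p, phi p = r -> supp (tI M) p) /\
  (forall r, supp (tT N) r -> exists! p, phi p = r /\ supp (tT M) p) /\
  (forall t, supp (tE N) t -> forall q, phi q = tau t ->
     exists! t', supp (tE M) t' /\ tmap phi t' = t /\ tau t' = q).

Definition comp_map (Q R : Type) (phi : Q -> R) (c : seq (Q * nat)) : seq (R * nat) :=
  map (fun x => (phi x.1, x.2)) c.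

(* Main.v *)
Require Import Defs.
From mathcomp Require Import all_boot all_order all_algebra.
From Stdlib Require Import Lia.
Set Implicit Arguments. Unset Strict Implicit.
Local Open Scope ring_scope.

Definition stepP (K : pzSemiRingType) (A : Type) (Q : finType) (M : twa K A Q) (w : seq A)
  (x y : Q * nat) : Prop :=
  exists t, supp (tE M) t /\ sigma t = x.1 /\ tau t = y.1 /\
    lambda t = wletter w x.2 /\ moves (delta t) x.2 y.2.

Fixpoint chainL (K : pzSemiRingType) (A : Type) (Q : finType) (M : twa K A Q) (w : seq A)
  (l : seq (Q * nat)) {struct l} : Prop :=
  match l with
  | x :: ((y :: _) as l') => stepP M w x y /\ chainL M w l'
  | _ => True
  end.

Lemma chainL_nth K A Q (M : twa K A Q) w (l : seq (Q * nat)) x0 :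
  (forall j, (j.+1 < size l)%N -> stepP M w (nth x0 l j) (nth x0 l j.+1)) <-> chainL M w l.
Proof.
elim: l => [|x l [IH1 IH2]]; first by split.
case: l IH1 IH2 => [|y l] IH1 IH2; first by split => // _ [|j].
split.
- move=> H; split; first exact: (H 0%N).
  apply: IH1 => j Hj; exact: (H j.+1 Hj).
- move=> [Hxy H] [|j] Hj //=. exact: IH2.
Qed.

Lemma chainL_rcons K A Q (M : twa K A Q) w (s : seq (Q * nat)) x y :
  chainL M w (rcons (rcons s x) y) <-> chainL M w (rcons s x) /\ stepP M w x y.
Proof.
elim: s => [|a [|b s] IH]; first by simpl; tauto.
- simpl; tauto.
- move: IH; simpl; tauto.
Qed.

Lemma moves_uniq d d' i i' : moves d i i' -> moves d' i i' -> d = d'.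
Proof. case: d; case: d' => //= H1 H2; lia. Qed.

Lemma trans_eq (Q A : Type) (t1 t2 : trans Q A) : sigma t1 = sigma t2 -> lambda t1 = lambda t2 ->
  delta t1 = delta t2 -> tau t1 = tau t2 -> t1 = t2.
Proof. by case: t1; case: t2 => /= ? ? ? ? ? ? ? ? -> -> -> ->. Qed.

Lemma step_trans_eq (Q A : Type) (w : seq A) (x y : Q * nat) (t : trans Q A) :
  sigma t = x.1 -> tau t = y.1 -> lambda t = wletter w x.2 -> moves (delta t) x.2 y.2 ->
  step_trans w x y = t.
Proof.
move=> H1 H2 H3 H4; apply: trans_eq => //=.
case: (delta t) H4 => /= H.
- case: eqP => // E; lia.
- by rewrite H eqxx.
Qed.

Section Morph.
Variables (K : pzSemiRingType) (A : Type) (Q R : finType) (M : twa K A Q) (N : twa K A R)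
  (phi : Q -> R) (w : seq A).
Hypothesis Hm : is_morphism M N phi.
Let f := fun x : Q * nat => (phi x.1, x.2).

Lemma step_map x y : stepP M w x y -> stepP N w (phi x.1, x.2) (phi y.1, y.2).
Proof.
move=> [t [Ht [Hs [Hta [Hl Hd]]]]]. have [Hsupp _] := Hm.2.2 t Ht.
exists (tmap phi t); rewrite /= Hs Hta; do !split => //.
Qed.

Lemma chainL_map l : chainL M w l -> chainL N w (map f l).
Proof.
elim: l => [|x l IH] //=. case: l IH => [|y l] IH //= [H1 H2]; split.
- exact: step_map.
- exact: IH.
Qed.

Lemma step_weight x y : stepP M w x y ->
  tE N (step_trans w (phi x.1, x.2) (phi y.1, y.2)) = tE M (step_trans w x y).
Proof.
move=> [t [Ht [Hs [Hta [Hl Hd]]]]].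
rewrite (step_trans_eq Hs Hta Hl Hd).
have -> : step_trans w (phi x.1, x.2) (phi y.1, y.2) = tmap phi t.
  by apply: step_trans_eq; rewrite /= ?Hs ?Hta.
exact: (Hm.2.2 t Ht).2.
Qed.

Lemma prod_map c0 cs : chainL M w (c0 :: cs) ->
  \prod_(xy <- zip (c0 :: cs) cs) odflt 0 (tE M (step_trans w xy.1 xy.2)) =
  \prod_(xy <- zip ((phi c0.1, c0.2) :: map f cs) (map f cs))
     odflt 0 (tE N (step_trans w xy.1 xy.2)).
Proof.
elim: cs c0 => [|y cs IH] c0 /=; first by rewrite !big_nil.
move=> [Hs Hc]. rewrite !big_cons /= (step_weight Hs) (IH y Hc). by [].
Qed.
End Morph.

Section Lift.
Variables (K : pzSemiRingType) (A : Type) (Q R : finType) (M : twa K A Q) (N : twa K A R)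
  (phi : Q -> R) (w : seq A).
Let f := fun x : Q * nat => (phi x.1, x.2).

Lemma lift_step_cov (Hc : is_covering M N phi) p i r i' :
  stepP N w (phi p, i) (r, i') ->
  exists q, stepP M w (p, i) (q, i') /\ phi q = r /\
    forall q2, stepP M w (p, i) (q2, i') -> phi q2 = r -> q2 = q.
Proof.
move=> [t [Ht [Hs [Hta [Hl Hd]]]]] /=; simpl in Hs, Hta, Hl, Hd.
have [t' [[Ht' [Hmap Hs']] Hu]] := Hc.2.2.2 t Ht p (esym Hs).
subst t; simpl in Hs, Hta, Hl, Hd.
exists (tau t'); split; [|split => //].
  by exists t'; do !split.
move=> q2 [t2 [Ht2 [Hs2 [Hta2 [Hl2 Hd2]]]]] Hq2; simpl in Hs2, Hta2, Hl2, Hd2.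
have E : tmap phi t2 = tmap phi t'.
  apply: trans_eq => /=; first by rewrite Hs2 Hs'.
  - by rewrite Hl2 Hl.
  - exact: moves_uniq Hd2 Hd.
  - by rewrite Hta2 Hq2 Hta.
have := Hu t2 (conj Ht2 (conj E Hs2)).
by move=> ->.
Qed.

Lemma lift_step_in (Hc : is_in_covering M N phi) r i q i' :
  stepP N w (r, i) (phi q, i') ->
  exists p, stepP M w (p, i) (q, i') /\ phi p = r /\
    forall p2, stepP M w (p2, i) (q, i') -> phi p2 = r -> p2 = p.
Proof.
move=> [t [Ht [Hs [Hta [Hl Hd]]]]] /=; simpl in Hs, Hta, Hl, Hd.
have [t' [[Ht' [Hmap Hs']] Hu]] := Hc.2.2.2 t Ht q (esym Hta).
subst t; simpl in Hs, Hta, Hl, Hd.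
exists (sigma t'); split; [|split => //].
  by exists t'; do !split.
move=> p2 [t2 [Ht2 [Hs2 [Hta2 [Hl2 Hd2]]]]] Hp2; simpl in Hs2, Hta2, Hl2, Hd2.
have E : tmap phi t2 = tmap phi t'.
  apply: trans_eq => /=; first by rewrite Hs2 Hp2 Hs.
  - by rewrite Hl2 Hl.
  - exact: moves_uniq Hd2 Hd.
  - by rewrite Hta2 Hs'.
have := Hu t2 (conj Ht2 (conj E Hta2)).
by move=> ->.
Qed.

Lemma lift_fwd (Hc : is_covering M N phi) s' : forall p i,
  chainL N w ((phi p, i) :: s') ->
  exists s, chainL M w ((p, i) :: s) /\ map f s = s' /\
    forall s2, chainL M w ((p, i) :: s2) -> map f s2 = s' -> s2 = s.
Proof.
elim: s' => [|[r i'] s'' IH] p i.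
  move=> _; exists [::]; split => //; split => //; by case.
move=> [Hst Hch].
have [q [Hq [Eq Uq]]] := lift_step_cov Hc Hst.
subst r.
have [s [Hs [Ms Us]]] := IH q i' Hch.
exists ((q, i') :: s); split; first by split.
split; first by rewrite /= Ms.
case=> [|[x1 x2] s3] //= [Hst3 Hch3] [E1 E2 E3].
subst x2.
have Ex := Uq x1 Hst3 E1. subst x1.
by rewrite (Us s3 Hch3 E3).
Qed.

Lemma lift_bwd (Hc : is_in_covering M N phi) s' : forall q i,
  chainL N w (rcons s' (phi q, i)) ->
  exists s, chainL M w (rcons s (q, i)) /\ map f s = s' /\
    forall s2, chainL M w (rcons s2 (q, i)) -> map f s2 = s' -> s2 = s.
Proof.
elim/last_ind: s' => [|s'' [r i0] IH] q i.
  move=> _; exists [::]; split => //; split => //; by case.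
move/chainL_rcons=> [Hch Hst].
have [p [Hp [Ep Up]]] := lift_step_in Hc Hst.
subst r.
have [s [Hs [Ms Us]]] := IH p i0 Hch.
exists (rcons s (p, i0)); split; first by apply/chainL_rcons.
split; first by rewrite map_rcons Ms.
case/lastP=> [|s3 [x1 x2]].
  by move=> _ H; have := congr1 size H; rewrite size_rcons.
move/chainL_rcons=> [Hch3 Hst3]; rewrite map_rcons => Em3.
case: (rcons_inj Em3) => E3 E1 E2.
subst x2.
have Ex := Up x1 Hst3 E1. subst x1.
by rewrite (Us s3 Hch3 E3).
Qed.
End Lift.

Lemma is_compE K A (Q : finType) (M : twa K A Q) w c : is_comp M w c ->
  exists c0 cs, c = c0 :: cs /\ c0.2 = 1%N /\ (last c0 cs).2 = (size w).+1 /\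
   supp (tI M) c0.1 /\ supp (tT M) (last c0 cs).1 /\
   (forall x, x \in c -> (x.2 <= (size w).+1)%N) /\ chainL M w c.
Proof.
move=> [c0 [cs [Ec [H1 [H2 [H3 [H4 [H5 H6]]]]]]]].
exists c0, cs; do !split => //. exact: (proj1 (chainL_nth M w c c0) H6).
Qed.

Lemma is_compI K A (Q : finType) (M : twa K A Q) w c d : (0 < size c)%N ->
  (head d c).2 = 1%N -> (last d c).2 = (size w).+1 -> supp (tI M) (head d c).1 ->
  supp (tT M) (last d c).1 -> (forall x, x \in c -> (x.2 <= (size w).+1)%N) ->
  chainL M w c -> is_comp M w c.
Proof.
case: c => // c0 cs _ /= H1 H2 H3 H4 H5 H6.
exists c0, cs; do !split => //. exact: (proj2 (chainL_nth M w (c0 :: cs) c0) H6).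
Qed.

Lemma head_map' (T U : Type) (g : T -> U) d (s : seq T) : head (g d) (map g s) = g (head d s).
Proof. by case: s. Qed.

Theorem mainTheorem2 (K : pzSemiRingType) (A : Type) (Q R : finType)
  (M : twa K A Q) (N : twa K A R) (phi : Q -> R) :
  wf_twa M -> wf_twa N ->
  is_covering M N phi \/ is_in_covering M N phi ->
  forall w : seq A,
    (forall c, is_comp M w c ->
       is_comp N w (comp_map phi c) /\ weight M w c = weight N w (comp_map phi c)) /\
    (forall c', is_comp N w c' -> exists! c, is_comp M w c /\ comp_map phi c = c').
Proof.
move=> _ _ Hcov w.
have Hm : is_morphism M N phi by case: Hcov => [[[H _] _]|[[H _] _]].
have HmI := Hm.1. have HmT := Hm.2.1.
split.
- move=> c /is_compE [c0 [cs [-> [H1 [H2 [HI [HT [Hb Hch]]]]]]]].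
  have Elast : last (phi c0.1, c0.2) (map (fun x : Q * nat => (phi x.1, x.2)) cs)
      = (phi (last c0 cs).1, (last c0 cs).2).
    exact: (last_map (fun x : Q * nat => (phi x.1, x.2)) cs c0).
  split.
  + apply: (@is_compI _ _ _ N w _ (phi c0.1, c0.2)) => //=.
    * by rewrite Elast.
    * by rewrite /supp (HmI _ HI).
    * by rewrite Elast /supp (HmT _ HT).
    * move=> x Hx.
      have : x \in map (fun x : Q * nat => (phi x.1, x.2)) (c0 :: cs) by [].
      by case/mapP => y Hy ->; exact: Hb.
    * exact: (chainL_map Hm Hch).
  + rewrite /weight /comp_map /= (HmI _ HI) Elast (HmT _ HT) (prod_map Hm Hch). by [].
- move=> c' /is_compE [c0' [cs' [-> [H1 [H2 [HI [HT [Hb Hch]]]]]]]].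
  case: Hcov => Hc.
  + case: c0' H1 H2 HI HT Hb Hch => r0 i0 /= H1 H2 HI HT Hb Hch.
    subst i0.
    have [p0 [[Ep0 Ip0] Up0]] := Hc.2.2.1 r0 HI.
    subst r0.
    have [s [Hs [Ms Us]]] := lift_fwd Hc Hch.
    have Elast : last (phi p0, 1%N) cs' = (phi (last (p0, 1%N) s).1, (last (p0, 1%N) s).2).
      rewrite -Ms; exact: (last_map (fun x : Q * nat => (phi x.1, x.2)) s (p0, 1%N)).
    have Ec : (phi p0, 1%N) :: cs' = map (fun x : Q * nat => (phi x.1, x.2)) ((p0, 1%N) :: s).
      by rewrite /= Ms.
    exists ((p0, 1%N) :: s); split; first split.
    * apply: (@is_compI _ _ _ M w _ (p0, 1%N)) => //=.
      - by rewrite Elast in H2.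
      - rewrite Elast in HT; exact: (Hc.2.1 _ HT _ erefl).
      - move=> x Hx; have := Hb (phi x.1, x.2); apply; rewrite Ec; exact: (map_f _ Hx).
    * by rewrite /comp_map /= Ms.
    * move=> c2 [/is_compE [d0 [ds [-> [D1 [D2 [DI [DT [Db Dch]]]]]]]] Em].
      case: d0 D1 DI Dch Em D2 DT Db => d1 d2 /= D1 DI Dch [E1 E2 E3] _ _ _.
      subst d2.
      have Ed := Up0 d1 (conj E1 DI). subst d1.
      by rewrite (Us ds Dch E3).
  + have [pk [[Epk Tpk] Upk]] := Hc.2.2.1 _ HT.
    have Hch' : chainL N w (rcons (belast c0' cs') (phi pk, (last c0' cs').2)).
      by rewrite Epk -surjective_pairing -lastI.
    have [s [Hs [Ms Us]]] := lift_bwd Hc Hch'.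
    have Emap : map (fun x : Q * nat => (phi x.1, x.2)) (rcons s (pk, (last c0' cs').2))
        = c0' :: cs'.
      by rewrite map_rcons Ms /= Epk -surjective_pairing -lastI.
    have Eh := head_map' (fun x : Q * nat => (phi x.1, x.2)) (pk, (last c0' cs').2)
                 (rcons s (pk, (last c0' cs').2)).
    rewrite Emap /= in Eh.
    have Eh1 := congr1 fst Eh; have Eh2 := congr1 snd Eh; simpl in Eh1, Eh2.
    exists (rcons s (pk, (last c0' cs').2)); split; first split.
    * apply: (@is_compI _ _ _ M w _ (pk, (last c0' cs').2)).
      - by rewrite size_rcons.
      - by rewrite -Eh2.
      - by rewrite last_rcons.
      - apply: (Hc.2.1 c0'.1); first exact: HI.
        by rewrite -Eh1.
      - by rewrite last_rcons.
      - move=> x Hx; have := Hb (phi x.1, x.2); apply; rewrite -Emap; exact: (map_f _ Hx).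
      - exact: Hs.
    * exact: Emap.
    * move=> c2 [Hc2 Em2].
      have [d0 [ds [Ec2 [_ [_ [_ [DT [_ Dch]]]]]]]] := is_compE Hc2.
      rewrite Ec2 lastI in Em2 Dch *.
      move: Em2; rewrite /comp_map -Emap !map_rcons => Em2.
      case: (rcons_inj Em2) => EB EL.
      move: EL DT Dch; case: (last d0 ds) => L1 L2 /= EL1 DT Dch EL2.
      subst L2.
      have EL : pk = L1.
        apply: Upk; split => //; by rewrite EL1 Epk.
      subst L1.
      have EB' : map (fun x : Q * nat => (phi x.1, x.2)) (belast d0 ds) = belast c0' cs'.
        by rewrite EB Ms.
      by rewrite (Us _ Dch EB').
Qed.
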